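(* Let $n\ge1$ and let $r_1,\ldots,r_n$ be distinct nonzero real numbers, labeled so that $r_k>0$ for $1\le k\le p$ and $r_k<0$ for $p+1\le k\le n$, where $0\le p\le n$. Let $V=V(r_1,\ldots,r_n)$ and $V_k=V(r_1,\ldots,r_{k-1},r_{k+1},\ldots,r_n)$ for $1\le k\le n$. Then $$\frac{1}{|r_1r_2\cdots r_n|}=\frac{1}{|V|}\int_0^\infty\Big(\Big|\sum_{k=1}^p(-1)^kV_ke^{-r_kx}\Big|+\Big|\sum_{k=p+1}^n(-1)^kV_ke^{r_kx}\Big|\Big)dx,$$ where an empty sum is $0$ (so for $p=n$ the right-hand side is $\frac{1}{|V|}\int_0^\infty|\sum_{k=1}^n(-1)^kV_ke^{-r_kx}|dx$, and for $p=0$ it is $\frac{1}{|V|}\int_0^\infty|\sum_{k=1}^n(-1)^kV_ke^{r_kx}|dx$).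
   Context: For numbers $x_1,\ldots,x_m$, $V(x_1,\ldots,x_m)=\det(x_j^{i-1})_{1\le i,j\le m}=\prod_{1\le i<j\le m}(x_j-x_i)$ is the Vandermonde determinant (equal to $1$ when $m\le1$). *)

(* Defs.v *)
From HB Require Import structures.
From mathcomp Require Import all_boot all_order all_algebra.
From mathcomp Require Import all_classical all_reals all_analysis.
Set Implicit Arguments. Unset Strict Implicit. Unset Printing Implicit Defensive.
Import Order.TTheory GRing.Theory Num.Theory.
Local Open Scope ring_scope.

(* Vandermonde determinant V(x_1,...,x_m) = det (x_j^(i-1))_{i,j}
   (indices 0-based here: entry (i,j) is x_j^i). For m = 0 it is 1. *)
Definition vdm (R : comNzRingType) (m : nat) (x : 'I_m -> R) : R :=
  \det (\matrix_(i < m, j < m) x j ^+ i).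

(* Main.v *)
Require Import Defs.
From HB Require Import structures.
From mathcomp Require Import all_boot all_order all_algebra.
From mathcomp Require Import all_classical all_reals all_analysis.
Import Order.TTheory GRing.Theory Num.Theory.

Local Open Scope ring_scope.
From mathcomp Require Import zify ring lra.
Section Calc.
Import numFieldNormedType.Exports.
Local Open Scope classical_set_scope.
Variable R : realType.
Definition esum {n} (c d : 'I_n -> R) (x : R) := \sum_(k < n) c k * expR (d k * x).

Lemma is_derive_term (a b x : R) : is_derive x 1 (fun y => a * expR (b * y)) (a * b * expR (b * x)).
Proof.
have h1 : is_derive x 1 (fun y : R => b * y) b.
  have := is_deriveZ b (is_derive_id x (1:R)).
  by rewrite /GRing.scale/= mulr1.
have h2 := is_derive1_comp (is_derive_expR (b * x)) h1.
have h3 := is_deriveZ a h2.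
have e : a * b * expR (b * x) = a * (expR (b * x) * b).
  by rewrite mulrAC -mulrA.
rewrite e.
exact: h3.
Qed.

Lemma is_derive_esum n (c d : 'I_n -> R) (x : R) :
  is_derive x 1 (esum c d) (esum (fun k => c k * d k) d x).
Proof.
have -> : esum c d = \sum_(k < n) (fun y => c k * expR (d k * y)).
  by rewrite fct_sumE.
apply: is_derive_sum => k; exact: is_derive_term.
Qed.
Arguments is_derive_esum {n}.

Lemma derivable_esum n (c d : 'I_n -> R) (x : R) : derivable (esum c d) x 1.
Proof. have h := is_derive_esum c d x. exact: ex_derive. Qed.

Lemma derive_esum n (c d : 'I_n -> R) (x : R) :
  derive1 (esum c d) x = esum (fun k => c k * d k) d x.
Proof. have h := is_derive_esum c d x. by rewrite derive1E derive_val. Qed.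

Lemma cvg_expR_neg (d : R) : d < 0 -> (expR (d * x) @[x --> +oo] --> 0).
Proof.
move=> d0; apply/cvgrPdist_le => e e0; near=> x.
rewrite sub0r normrN ger0_norm ?expR_ge0 //.
have -> : d * x = - (- d * x) by rewrite mulNr opprK.
rewrite expRN -[leRHS]invrK lef_pV2 ?posrE ?expR_gt0 ?invr_gt0//.
rewrite (le_trans _ (expR_ge1Dx _))// -lerBlDl.
have hd : 0 < - d by rewrite oppr_gt0.
rewrite -ler_pdivrMl //.
Unshelve. end_near. Qed.

Lemma esum_cvg0 n (c d : 'I_n -> R) : (forall k, c k != 0 -> d k < 0) ->
  (esum c d x @[x --> +oo] --> 0).
Proof.
elim: n c d => [|n IH] c d H.
  have -> : esum c d = fun=> 0 by apply/funext => x; rewrite /esum big_ord0.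
  exact: (@cvg_cst R^o 0).
have h1 := IH (fun k => c (widen_ord (leqnSn n) k)) (fun k => d (widen_ord (leqnSn n) k)) (fun k => H _).
have h2 : c ord_max * expR (d ord_max * x) @[x --> +oo] --> 0.
  have [c0|c0] := eqVneq (c ord_max) 0.
    have -> : (fun x => c ord_max * expR (d ord_max * x)) = fun=> 0.
      by apply/funext => x; rewrite c0 mul0r.
    exact: (@cvg_cst R^o 0).
  have hh := @cvgMl_tmp _ _ _ _ _ (c ord_max) _ (cvg_expR_neg _ (H _ c0)); rewrite mulr0 in hh; exact: hh.
have -> : esum c d = (esum (fun k => c (widen_ord (leqnSn n) k)) (fun k => d (widen_ord (leqnSn n) k))) + (fun x => c ord_max * expR (d ord_max * x)).
  by apply/funext => x; rewrite /esum big_ord_recr.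
rewrite -[0](addr0 0); exact: cvgD.
Qed.

Lemma esum_nincr n (c d : 'I_n -> R) a :
  (forall t, a < t -> esum (fun k => c k * d k) d t <= 0) ->
  forall x y, a <= x -> x <= y -> esum c d y <= esum c d x.
Proof.
move=> H; apply: ler0_derive1_nincry.
- by move=> x _; exact: derivable_esum.
- move=> x; rewrite in_itv /= andbT => ax.
  by rewrite derive_esum; exact: H.
- apply: derivable_within_continuous => x _.
  exact: derivable_esum.
Qed.

Lemma esum_ge0 n (c d : 'I_n -> R) :
  (forall k, c k != 0 -> d k < 0) ->
  (forall t, 0 < t -> esum (fun k => c k * d k) d t <= 0) ->
  forall x, 0 <= x -> 0 <= esum c d x.
Proof.
move=> Hd H x x0.
have L := esum_cvg0 _ _ _ Hd.
rewrite -(cvg_lim _ L) //.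
apply: limr_le; first exact: (cvgP _ L).
near=> y.
apply: (esum_nincr _ _ _ 0 H) => //.
Unshelve. end_near. Qed.
Lemma esum_cont n (c d : 'I_n -> R) (x : R) : {for x, continuous (esum c d)}.
Proof. apply: differentiable_continuous; apply/derivable1_diffP; exact: derivable_esum. Qed.
Lemma esum_within n (c d : 'I_n -> R) (A : set R) : {within A, continuous (esum c d)}.
Proof. by apply: continuous_subspaceT => x; exact: esum_cont. Qed.
Lemma esum_right n (c d : 'I_n -> R) (a : R) : esum c d x @[x --> a^'+] --> esum c d a.
Proof. by apply: cvg_at_right_filter; exact: esum_cont. Qed.
End Calc.
Arguments esum {R n}.
Section Alg.
Set Implicit Arguments. Unset Strict Implicit.
Variables (R : fieldType) (n : nat) (r : 'I_n -> R).
Hypothesis hinj : injective r.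

Definition w (S : {set 'I_n}) k := (\prod_(j in S :\ k) (r j - r k))^-1.
Definition PS (S : {set 'I_n}) := \prod_(j in S) r j.

Lemma rneq (i k : 'I_n) : i != k -> r i - r k != 0.
Proof. by move=> ik; rewrite subr_eq0; apply: contra ik => /eqP /hinj ->. Qed.

Lemma w_U1 (i : 'I_n) (S : {set 'I_n}) k : i \notin S -> k \in S -> w (i |: S) k = w S k / (r i - r k).
Proof.
move=> iS kS.
have ik : i != k by apply: contraNneq iS => ->.
rewrite /w; have -> : (i |: S) :\ k = i |: (S :\ k).
  apply/finset.setP => j; rewrite !inE.
  by case: (eqVneq j i) => [->|]; rewrite ?ik.
rewrite big_setU1 /=; last by rewrite !inE negb_and iS orbT.
by rewrite invfM mulrC.
Qed.

Lemma w_U1i (i : 'I_n) (S : {set 'I_n}) : i \notin S -> w (i |: S) i = (\prod_(j in S) (r j - r i))^-1.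
Proof. by move=> iS; rewrite /w finset.setU1K. Qed.

Lemma PS_U1 (i : 'I_n) (S : {set 'I_n}) : i \notin S -> PS (i |: S) = r i * PS S.
Proof. by move=> iS; rewrite /PS big_setU1. Qed.

Lemma w1 (j : 'I_n) : w [set j] j = 1.
Proof. by rewrite /w finset.setDv big_set0 invr1. Qed.

Lemma prod_neq0 (S : {set 'I_n}) a : (forall j, j \in S -> r j != a) -> \prod_(j in S) (r j - a) != 0.
Proof. by move=> h; apply/prodf_neq0 => j jS; rewrite subr_eq0 h. Qed.

Lemma split_set (S : {set 'I_n}) m : #|S| = m.+2 ->
  exists (i : 'I_n) (S' : {set 'I_n}), [/\ i \notin S', S = i |: S' & #|S'| = m.+1].
Proof.
move=> cS.
have : S != finset.set0 by rewrite -card_gt0 cS.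
case/finset.set0Pn => i iS.
exists i, (S :\ i); split.
- by rewrite !inE eqxx.
- by rewrite finset.setD1K.
- by move: cS; rewrite (cardsD1 i) iS add1n => -[].
Qed.

Lemma lagrL m : forall S : {set 'I_n}, #|S| = m.+1 -> forall a, (forall j, j \in S -> r j != a) ->
  \sum_(k in S) w S k / (a - r k) = - (\prod_(j in S) (r j - a))^-1.
Proof.
elim: m => [|m IH] S cS a Ha.
  have /cards1P [j ->] : #|S| == 1%N by rewrite cS.
  rewrite !big_set1 w1 div1r -invrN opprB //.
have [i [S' [iS' eS cS']]] := split_set cS; subst S.
have Ha' : forall j, j \in S' -> r j != a.
  by move=> j jS; apply: Ha; rewrite !inE jS orbT.
have Hi : forall j, j \in S' -> r j != r i.
  by move=> j jS; apply: contraNneq iS' => /hinj <-.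
have ai : a - r i != 0 by rewrite subr_eq0 eq_sym Ha // setU11.
rewrite big_setU1 //= big_setU1 //= w_U1i //.
have pf : forall k, k \in S' -> w (i |: S') k / (a - r k) =
    (a - r i)^-1 * (w S' k / (r i - r k) - w S' k / (a - r k)).
  move=> k kS; rewrite w_U1 //.
  have h1 : r i - r k != 0 by rewrite subr_eq0 eq_sym Hi.
  have h2 : a - r k != 0 by rewrite subr_eq0 eq_sym Ha'.
  by field; rewrite h1 h2 ai.
rewrite (eq_bigr _ pf) -mulr_sumr sumrB IH // IH //.
have n1 := prod_neq0 Hi.
have n2 := prod_neq0 Ha'.
have n3 : r i - a != 0 by rewrite subr_eq0 Ha // setU11.
field.
by rewrite n1 n2 n3 ai.
Qed.

Lemma wsum0 m (S : {set 'I_n}) : #|S| = m.+2 -> \sum_(k in S) w S k = 0.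
Proof.
move=> cS.
have [i [S' [iS' eS cS']]] := split_set cS; subst S.
have Hi : forall j, j \in S' -> r j != r i.
  by move=> j jS; apply: contraNneq iS' => /hinj <-.
rewrite big_setU1 //= w_U1i //.
have pf : forall k, k \in S' -> w (i |: S') k = w S' k / (r i - r k).
  by move=> k kS; rewrite w_U1.
by rewrite (eq_bigr _ pf) (lagrL cS') // addrN.
Qed.

End Alg.

Section Sign.
Set Implicit Arguments. Unset Strict Implicit.
Variables (R : realType) (n : nat) (r : 'I_n -> R).
Hypothesis hinj : injective r.
Hypothesis hnz : forall k, r k != 0.

Definition X (s : R) (Q : pred 'I_n) (S : {set 'I_n}) (t : R) :=
  \sum_(k in S | Q k) w r S k * expR (s * r k * t).
Definition cf (Q : pred 'I_n) (S : {set 'I_n}) (k : 'I_n) : R :=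
  if (k \in S) && Q k then PS r S * w r S k else 0.
Definition df (s : R) (i : 'I_n) (k : 'I_n) : R := s * (r k - r i).

Lemma esum_X (s : R) Q (S : {set 'I_n}) (i : 'I_n) (t : R) :
  esum (cf Q S) (df s i) t = expR (- s * r i * t) * (PS r S * X s Q S t).
Proof.
rewrite /esum /X !mulr_sumr [RHS]big_mkcond /=.
apply: eq_bigr => k _; rewrite /cf /df; case: ifP => _; last by rewrite mul0r.
have -> : s * (r k - r i) * t = - s * r i * t + s * r k * t by ring.
rewrite expRD; ring.
Qed.

Lemma esum_dX (s : R) Q (S' : {set 'I_n}) (i : 'I_n) (t : R) : i \notin S' ->
  esum (fun k => cf Q (i |: S') k * df s i k) (df s i) t =
  - s * r i * esum (cf Q S') (df s i) t.
Proof.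
move=> iS; rewrite /esum mulr_sumr; apply: eq_bigr => k _; rewrite /cf /df.
case: (eqVneq k i) => [->|ki].
  by rewrite (negbTE iS) /= subrr !mulr0 !mul0r mulr0.
rewrite in_setU1 (negbTE ki) /=.
case: ifP => [/andP[kS _]|_]; last by rewrite !mul0r mulr0.
rewrite PS_U1 // w_U1 //.
have h : r i - r k != 0 by apply: rneq => //; rewrite eq_sym.
field; exact: h.
Qed.

Lemma esumN (m : nat) (c d : 'I_m -> R) x : esum (fun k => - c k) d x = - esum c d x.
Proof. by rewrite /esum -sumrN; apply: eq_bigr => k _; rewrite mulNr. Qed.

Lemma esumN2 (m : nat) (c d : 'I_m -> R) x :
  esum (fun k => - c k * d k) d x = - esum (fun k => c k * d k) d x.
Proof. by rewrite /esum -sumrN; apply: eq_bigr => k _; rewrite !mulNr. Qed.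

Lemma esum_le0 (m : nat) (c d : 'I_m -> R) :
  (forall k, c k != 0 -> d k < 0) ->
  (forall t, 0 < t -> 0 <= esum (fun k => c k * d k) d t) ->
  forall x, 0 <= x -> esum c d x <= 0.
Proof.
move=> Hd H x x0.
have := @esum_ge0 R m (fun k => - c k) d _ _ x x0.
rewrite esumN oppr_ge0; apply.
- by move=> k; rewrite oppr_eq0; exact: Hd.
- by move=> t t0; rewrite esumN2 oppr_le0; exact: H.
Qed.

Lemma esum_ndecr (m : nat) (c d : 'I_m -> R) a :
  (forall t, a < t -> 0 <= esum (fun k => c k * d k) d t) ->
  forall x y, a <= x -> x <= y -> esum c d x <= esum c d y.
Proof.
move=> H x y ax xy.
have := @esum_nincr R m (fun k => - c k) d a _ x y ax xy.
rewrite !esumN lerN2; apply.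
by move=> t t0; rewrite esumN2 oppr_le0; exact: H.
Qed.

Definition pos : pred 'I_n := fun k => 0 < r k.
Definition neg : pred 'I_n := fun k => r k < 0.

Definition Inv (S : {set 'I_n}) := forall x, 0 <= x ->
  0 <= PS r S * X (-1) pos S x /\ PS r S * X 1 neg S x <= 0.

Lemma X0 (s : R) Q (S : {set 'I_n}) : X s Q S 0 = \sum_(k in S | Q k) w r S k.
Proof. by apply: eq_bigr => k _; rewrite mulr0 expR0 mulr1. Qed.

Lemma AB0 m (S : {set 'I_n}) : #|S| = m.+2 -> X (-1) pos S 0 + X 1 neg S 0 = 0.
Proof.
move=> cS; rewrite !X0 -[RHS](wsum0 hinj cS) [RHS](bigID pos) /=; congr (_ + _).
apply: eq_bigl => k; rewrite /pos /neg; congr (_ && _).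
by rewrite -leNgt le_eqVlt (negbTE (hnz k)).
Qed.

Lemma Inv1 j : Inv [set j].
Proof.
move=> x x0; rewrite /X /PS !big_mkcondr /= !big_set1 w1 /pos /neg.
case: (ltgtP (r j) 0) => h.
- split; last by rewrite nmulr_rle0 // mul1r expR_ge0.
  by rewrite mulr0.
- split; first by rewrite mul1r mulr_ge0 // ?expR_ge0 // ltW.
  by rewrite mulr0.
- by move: (hnz j); rewrite h eqxx.
Qed.


Lemma Inv_step (i : 'I_n) (S' : {set 'I_n}) m : i \notin S' -> #|S'| = m.+1 ->
  Inv S' -> Inv (i |: S').
Proof.
move=> iS cS' IH.
set S := i |: S'.
have cS : #|S| = m.+2 by rewrite /S cardsU1 iS cS'.
have AB := AB0 cS.
have dA t : esum (fun k => cf pos S k * df (-1) i k) (df (-1) i) t =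
   - (-1) * r i * (expR (- (-1) * r i * t) * (PS r S' * X (-1) pos S' t)).
  by rewrite esum_dX // esum_X.
have dB t : esum (fun k => cf neg S k * df 1 i k) (df 1 i) t =
   - 1 * r i * (expR (- 1 * r i * t) * (PS r S' * X 1 neg S' t)).
  by rewrite esum_dX // esum_X.
have eA x : esum (cf pos S) (df (-1) i) x = expR (- (-1) * r i * x) * (PS r S * X (-1) pos S x).
  exact: esum_X.
have eB x : esum (cf neg S) (df 1 i) x = expR (- 1 * r i * x) * (PS r S * X 1 neg S x).
  exact: esum_X.
have hi := hnz i.
have hE : forall y : R, 0 < expR y by move=> y; exact: expR_gt0.
case: (ltgtP (r i) 0) => ri; last by move: hi; rewrite ri eqxx.
-
  have HA : forall x, 0 <= x -> 0 <= PS r S * X (-1) pos S x.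
    move=> x x0.
    have h : 0 <= esum (cf pos S) (df (-1) i) x.
      apply: (@esum_ge0 R n) => //.
      + move=> k; rewrite /cf /df; case: ifP => [/andP[_ hk] _|_]; last by rewrite eqxx.
        rewrite /pos in hk; nra.
      + move=> t t0; rewrite dA.
        have [h _] := IH t (ltW t0).
        have := hE (- (-1) * r i * t).
        set e := expR _; set y := PS r S' * _ => he.
        have ey : 0 <= e * y by exact: mulr_ge0 (ltW he) h.
        nra.
    by rewrite eA pmulr_rge0 in h.
  move=> x x0; split; first exact: HA.
  have h0 : esum (cf neg S) (df 1 i) x <= esum (cf neg S) (df 1 i) 0.
    apply: (@esum_nincr R n _ _ 0) => // t t0.
    rewrite dB.
    have [_ h] := IH t (ltW t0).
    have := hE (- 1 * r i * t).
    set e := expR _; set y := PS r S' * _ => he.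
    have ey : e * y <= 0 by exact: mulr_ge0_le0 (ltW he) h.
    nra.
  move: h0; rewrite !eB mulr0 expR0 mul1r.
  have := HA 0 (lexx 0).
  have -> : X (-1) pos S 0 = - X 1 neg S 0 by apply/eqP; rewrite -addr_eq0 AB.
  have := hE (- 1 * r i * x).
  set e := expR _; set y := PS r S * X 1 neg S x; set z := X 1 neg S 0.
  nra.
-
  have HB : forall x, 0 <= x -> PS r S * X 1 neg S x <= 0.
    move=> x x0.
    have h : esum (cf neg S) (df 1 i) x <= 0.
      apply: esum_le0 => //.
      + move=> k; rewrite /cf /df; case: ifP => [/andP[_ hk] _|_]; last by rewrite eqxx.
        rewrite /neg in hk; nra.
      + move=> t t0; rewrite dB.
        have [_ h] := IH t (ltW t0).
        have := hE (- 1 * r i * t).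
        set e := expR _; set y := PS r S' * _ => he.
        have ey : e * y <= 0 by exact: mulr_ge0_le0 (ltW he) h.
        nra.
    by rewrite eB pmulr_rle0 in h.
  move=> x x0; split; last exact: HB.
  have h0 : esum (cf pos S) (df (-1) i) 0 <= esum (cf pos S) (df (-1) i) x.
    apply: (@esum_ndecr _ _ _ 0) => // t t0.
    rewrite dA.
    have [h _] := IH t (ltW t0).
    have := hE (- (-1) * r i * t).
    set e := expR _; set y := PS r S' * _ => he.
    have ey : 0 <= e * y by exact: mulr_ge0 (ltW he) h.
    nra.
  move: h0; rewrite !eA mulr0 expR0 mul1r.
  have := HB 0 (lexx 0).
  have -> : X (-1) pos S 0 = - X 1 neg S 0 by apply/eqP; rewrite -addr_eq0 AB.
  have := hE (- (-1) * r i * x).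
  set e := expR _; set y := PS r S * X (-1) pos S x; set z := X 1 neg S 0.
  nra.
Qed.

Lemma InvAll m (S : {set 'I_n}) : #|S| = m.+1 -> Inv S.
Proof.
elim: m S => [|m IH] S cS.
  have /cards1P [j ->] : #|S| == 1%N by rewrite cS.
  exact: Inv1.
have [i [S' [iS' eS cS']]] := split_set cS; subst S.
exact: (Inv_step iS' cS' (IH _ cS')).
Qed.

End Sign.

Lemma vdm_prod (R : comNzRingType) m (x : 'I_m -> R) :
  vdm x = \prod_(i < m) \prod_(j < m | (i < j)%N) (x j - x i).
Proof.
have := det_Vandermonde (\row_j x j).
under eq_bigr do under eq_bigr do rewrite !mxE.
move=> <-; rewrite /vdm; congr (\det _).
by apply/matrixP => i j; rewrite !mxE.
Qed.

Lemma lift_lt n (k : 'I_n) (i j : 'I_n.-1) : (lift k i < lift k j)%N = (i < j)%N.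
Proof. by rewrite /= !ltnNge leq_bump2. Qed.

Lemma lift_ltk n (k : 'I_n) (i : 'I_n.-1) : (lift k i < k)%N = (i < k)%N.
Proof. rewrite /= /bump; case: leqP => h /=; lia. Qed.

Lemma lift_gtk n (k : 'I_n) (i : 'I_n.-1) : (k < lift k i)%N = ~~ (i < k)%N.
Proof. rewrite /= /bump; case: leqP => h /=; lia. Qed.

Lemma prod_sign (R : comNzRingType) m k : (k <= m)%N ->
  \prod_(j < m | (j < k)%N) (-1 : R) = (-1) ^+ k.
Proof.
move=> km; rewrite (big_ord_narrow km) /=.
by rewrite prodr_const card_ord.
Qed.
Lemma vdm_lift (R : comNzRingType) n (x : 'I_n -> R) (k : 'I_n) :
  vdm x = (-1) ^+ k * vdm (fun j : 'I_n.-1 => x (lift k j)) *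
          \prod_(j < n.-1) (x (lift k j) - x k).
Proof.
have e0 : forall i : 'I_n.-1, \prod_(j < n | (lift k i < j)%N) (x j - x (lift k i)) =
   (if (lift k i < k)%N then x k - x (lift k i) else 1) *
   \prod_(j < n.-1 | (i < j)%N) (x (lift k j) - x (lift k i)).
  move=> i; rewrite big_mkcond (bigD1_ord k) // [in RHS]big_mkcond; congr (_ * _).
  by apply: eq_bigr => j _; rewrite lift_lt.
rewrite !vdm_prod (bigD1_ord k) // (eq_bigr _ (fun i _ => e0 i)) big_split /=.
have e2 : \prod_(j < n | (k < j)%N) (x j - x k) =
    \prod_(j < n.-1 | ~~ (j < k)%N) (x (lift k j) - x k).
  rewrite big_mkcond (bigD1_ord k) //= ltnn mul1r [RHS]big_mkcond.
  by apply: eq_bigr => j _; rewrite lift_gtk.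
have e3 : \prod_(i < n.-1) (if (lift k i < k)%N then x k - x (lift k i) else 1) =
    \prod_(j < n.-1 | (j < k)%N) (x k - x (lift k j)).
  rewrite [RHS]big_mkcond; apply: eq_bigr => j _; by rewrite lift_ltk.
rewrite e2 e3.
rewrite [\prod_(j < n.-1) (x (lift k j) - x k)](bigID (fun j : 'I_n.-1 => (j < k)%N)) /=.
have kn : (k <= n.-1)%N by move: (ltn_ord k); case: (nat_of_ord k) => //= m; lia.
rewrite -(prod_sign R kn).
have e4 : \prod_(j < n.-1 | (j < k)%N) (x k - x (lift k j)) =
  \prod_(j < n.-1 | (j < k)%N) (-1) * \prod_(j < n.-1 | (j < k)%N) (x (lift k j) - x k).
  by rewrite -big_split /=; apply: eq_bigr => j _; rewrite mulN1r opprB.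
rewrite e4.
set a := \prod_(j < n.-1 | ~~ _) _.
set b := \prod_(j < n.-1 | (j < k)%N) (-1).
set c := \prod_(j < n.-1 | (j < k)%N) (_ - _).
set d := \prod_(i < n.-1) _.
ring.
Qed.

Local Open Scope classical_set_scope.

Theorem proposition1 (R : realType) (n p : nat) (r : 'I_n -> R)
  (hn : (1 <= n)%N) (hp : (p <= n)%N)
  (hinj : injective r) (hnz : forall k, r k != 0)
  (hpos : forall k : 'I_n, (k < p)%N -> 0 < r k)
  (hneg : forall k : 'I_n, (p <= k)%N -> r k < 0) :
  ((`|\prod_(k < n) r k|)^-1)%:E =
  (((`|vdm r|)^-1)%:E *
  \int[lebesgue_measure]_(x in `[0%R, +oo[)
     (`| \sum_(k < n | (k < p)%N)
            (-1) ^+ k.+1 * vdm (fun j : 'I_n.-1 => r (lift k j)) * expR (- r k * x) |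
      + `| \sum_(k < n | (p <= k)%N)
            (-1) ^+ k.+1 * vdm (fun j : 'I_n.-1 => r (lift k j)) * expR (r k * x) |)%:E)%E.
Proof.
have hV : vdm r != 0.
  rewrite vdm_prod; apply/prodf_neq0 => i _; apply/prodf_neq0 => j ij.
  apply: rneq => //; apply: contraTneq ij => ->; by rewrite ltnn.
set T : {set 'I_n} := finset.setT.
have cT : #|T| = n.-1.+1 by rewrite cardsT card_ord prednK.
have Hinv := InvAll hinj hnz cT.
set P := PS r T.
have hP : P != 0 by apply/prodf_neq0 => j _; exact: hnz.
have PE : P = \prod_(k < n) r k.
  by rewrite /P /PS; apply: eq_bigl => j; rewrite finset.in_setT.
have vw : forall k : 'I_n, (-1) ^+ k.+1 * vdm (fun j : 'I_n.-1 => r (lift k j)) =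
    - vdm r * w r T k.
  move=> k.
  have QE : \prod_(j in T :\ k) (r j - r k) = \prod_(j < n.-1) (r (lift k j) - r k).
    rewrite (eq_bigl (fun j => j != k)); last by move=> j; rewrite !inE andbT.
    rewrite big_mkcond (bigD1_ord k) //= eqxx mul1r.
    by apply: eq_bigr => j _; rewrite lift_eqF.
  have hQ : \prod_(j < n.-1) (r (lift k j) - r k) != 0.
    by apply/prodf_neq0 => j _; apply: rneq => //; rewrite eq_sym neq_lift.
  rewrite /w QE (vdm_lift r k) exprS.
  by field.
have hpn : forall k : 'I_n, ((k < p)%N) = (0 < r k).
  move=> k; case: (ltnP k p) => h; first by rewrite hpos.
  by apply/esym/negbTE; rewrite -leNgt ltW // hneg.
have hnn : forall k : 'I_n, ((p <= k)%N) = (r k < 0).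
  move=> k; case: (leqP p k) => h; first by rewrite hneg.
  by apply/esym/negbTE; rewrite -leNgt ltW // hpos.
have S1 : forall x, \sum_(k < n | (k < p)%N) (-1) ^+ k.+1 *
    vdm (fun j : 'I_n.-1 => r (lift k j)) * expR (- r k * x) =
    - vdm r * X r (-1) (pos r) T x.
  move=> x; rewrite /X mulr_sumr; apply: eq_big => k.
    by rewrite hpn finset.in_setT.
  by move=> _; rewrite vw mulN1r mulrA.
have S2 : forall x, \sum_(k < n | (p <= k)%N) (-1) ^+ k.+1 *
    vdm (fun j : 'I_n.-1 => r (lift k j)) * expR (r k * x) =
    - vdm r * X r 1 (neg r) T x.
  move=> x; rewrite /X mulr_sumr; apply: eq_big => k.
    by rewrite hnn finset.in_setT.
  by move=> _; rewrite vw mul1r mulrA.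
set c := fun k => `|vdm r| / `|P| * (P * w r T k * (if 0 < r k then 1 else -1)).
set d := fun k : 'I_n => - `|r k|.
have hd : forall k, d k < 0 by move=> k; rewrite /d oppr_lt0 normr_gt0 hnz.
have hPn : `|P| != 0 by rewrite normr_eq0.
have fx : forall x, 0 <= x ->
   `| \sum_(k < n | (k < p)%N)
            (-1) ^+ k.+1 * vdm (fun j : 'I_n.-1 => r (lift k j)) * expR (- r k * x) |
      + `| \sum_(k < n | (p <= k)%N)
            (-1) ^+ k.+1 * vdm (fun j : 'I_n.-1 => r (lift k j)) * expR (r k * x) |
    = esum c d x.
  move=> x x0; rewrite S1 S2 !normrM normrN.
  have [hPA hPB] := Hinv x x0.
  set A := X r (-1) (pos r) T x.
  set B := X r 1 (neg r) T x.
  have hA : `|A| = P * A / `|P|.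
    by rewrite -(ger0_norm hPA) normrM mulrAC divff ?mul1r.
  have hB : `|B| = - (P * B) / `|P|.
    by rewrite -(ler0_norm hPB) normrM mulrAC divff ?mul1r.
  have eA : \sum_(k < n | pos r k) c k * expR (d k * x) = `|vdm r| / `|P| * (P * A).
    rewrite /A /X !mulr_sumr; apply: eq_big => k; first by rewrite finset.in_setT.
    move=> hk; have hk' : 0 < r k := hk.
    rewrite /c /d hk' (gtr0_norm hk') mulr1 mulN1r; ring.
  have eB : \sum_(k < n | ~~ pos r k) c k * expR (d k * x) = - (`|vdm r| / `|P| * (P * B)).
    rewrite /B /X !mulr_sumr -sumrN; apply: eq_big => k.
      by rewrite finset.in_setT /neg /pos -leNgt le_eqVlt (negbTE (hnz k)).
    move=> hk; have hk' : r k < 0 by move: hk; rewrite /pos -leNgt le_eqVlt (negbTE (hnz k)).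
    have hk2 : (0 < r k) = false := negbTE hk.
    rewrite /c /d hk2 (ltr0_norm hk') opprK mul1r; ring.
  rewrite /esum (bigID (pos r)) /= eA eB hA hB.
  by field.
set F := esum (fun k => c k / d k) d.
have contE := @esum_cont R n.
have L : \sum_(k in T) w r T k / (0 - r k) = - (\prod_(j in T) (r j - 0))^-1.
  by apply: (lagrL hinj cT) => j _; exact: hnz.
have F0 : F 0 = - (`|vdm r| / `|P|).
  rewrite /F /esum.
  rewrite (eq_bigr (fun k => `|vdm r| / `|P| * P * (w r T k / (0 - r k)))); last first.
    move=> k _; rewrite mulr0 expR0 mulr1 /c /d.
    have hk := hnz k.
    case: ifP => h.
      by rewrite (gtr0_norm h); field; rewrite hk hPn.
    have h' : r k < 0 by rewrite lt_neqAle hk /= leNgt h.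
    by rewrite (ltr0_norm h'); field; rewrite hk hPn.
  rewrite -mulr_sumr.
  have -> : \sum_(k < n) w r T k / (0 - r k) = \sum_(k in T) w r T k / (0 - r k).
    by apply: eq_bigl => k; rewrite finset.in_setT.
  rewrite L.
  under eq_bigr do rewrite subr0.
  rewrite -/(PS r T) -/P.
  by field; rewrite hP hPn.
have int : (\int[lebesgue_measure]_(x in `[0%R, +oo[) (esum c d x)%:E = (0:R)%:E - (F 0)%:E)%E.
  apply: ge0_continuous_FTC2y.
  - by move=> x x0; rewrite -fx //; exact: addr_ge0.
  - exact: esum_within.
  - exact: (@esum_cvg0 R n _ _ (fun k _ => hd k)).
  - by move=> x _; exact: derivable_esum.
  - exact: esum_right.
  - move=> x _; rewrite derive_esum /esum; apply: eq_bigr => k _.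
    by rewrite divfK // ltr0_neq0.
under eq_integral => x hx.
  have x0 : 0 <= x by move: hx; rewrite inE /= in_itv /= andbT.
  rewrite fx //.
  over.
rewrite int F0 -PE -EFinB -EFinM sub0r opprK.
congr (_%:E).
have hVn : `|vdm r| != 0 by rewrite normr_eq0.
by field; rewrite hVn hPn.
Qed.
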